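(* Let $n\ge 3$ and let $j_1,\dots,j_{n-2}$ be an enumeration (linear order) of the set $\{2,\dots,n-1\}$. For $t=1,\dots,n-2$, let $J_t$ be the maximal set of consecutive integers contained in $\{2,\dots,n-1\}\setminus\{j_1,\dots,j_{t-1}\}$ that contains $j_t$, let $ext(J_t)=\{\min J_t-1,\dots,\max J_t+1\}$, and let $T_t=\{abc\in\Lambda:\ a,c\in ext(J_t),\ a<j_t<c\}$. For $S\subseteq\{1,\dots,n-2\}$ put $T_S=\bigcup_{t\in S}T_t$. Then $\mathbf D=\{T_S: S\subseteq\{1,\dots,n-2\}\}$ consists of tilings, has exactly $2^{n-2}$ elements, is closed under $T\mapsto\Lambda\setminus T$ (i.e. is symmetric), and is a Condorcet super-domain.
   Context: Fix an integer $n\ge 3$ and write $[n]=\{1,\dots,n\}$. Let $\Lambda$ be the set of 3-element subsets of $[n]$; a triple $\{a,b,c\}$ with $a<b<c$ is written $abc$. For a 4-element subset $F=\{i<j<k<l\}$ of $[n]$, the stick of $F$ is the sequence $(ijk,\ ijl,\ ikl,\ jkl)$. A tiling (the inversion set of a rhombus tiling of the zonogon $Z(n;2)$) is a subset $T\subseteq\Lambda$ such that for every 4-element $F\subseteq[n]$, $T\cap\mathrm{stick}(F)$ is an initial segment or a final segment of the stick (empty set and whole stick allowed). For a finite set $V$ of odd cardinality and tilings $(T_v)_{v\in V}$, $sm((T_v)_{v\in V})$ is the set of triples lying in $T_v$ for more than $|V|/2$ indices $v$. A set $\mathbf D$ of tilings is a Condorcet super-domain if for every finite $V$ of odd cardinality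 and every family $(T_v)_{v\in V}$ with all $T_v\in\mathbf D$, $sm((T_v)_{v\in V})$ is a tiling. *)

(* Defs.v *)
From mathcomp Require Import all_boot.
Set Implicit Arguments. Unset Strict Implicit. Unset Printing Implicit Defensive.

(* The ground set [n] = {1,...,n} is represented inside 'I_n.+1 (values 0..n);
   the value 0 is never used by triples in Lambda. A triple abc (a<b<c) is the
   ordered tuple ((a,b),c). *)
Definition trip (n : nat) := ('I_n.+1 * 'I_n.+1 * 'I_n.+1)%type.

Definition Lambda (n : nat) : {set trip n} :=
  [set x : trip n | (0 < x.1.1) && (x.1.1 < x.1.2) && (x.1.2 < x.2)].

Definition mk3 n (a b c : 'I_n.+1) : trip n := (a, b, c).

Definition init_seg (b : seq bool) : Prop :=
  exists m, m <= size b /\ b = nseq m true ++ nseq (size b - m) false.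
Definition final_seg (b : seq bool) : Prop :=
  exists m, m <= size b /\ b = nseq m false ++ nseq (size b - m) true.

Definition stick n (i j k l : 'I_n.+1) : seq (trip n) :=
  [:: mk3 i j k; mk3 i j l; mk3 i k l; mk3 j k l].

Definition tiling n (T : {set trip n}) : Prop :=
  T \subset Lambda n /\
  forall i j k l : 'I_n.+1, 0 < i -> i < j -> j < k -> k < l ->
    let b := [seq x \in T | x <- stick i j k l] in
    init_seg b \/ final_seg b.

Definition sm n (V : finType) (Tv : V -> {set trip n}) : {set trip n} :=
  [set x : trip n | #|V| < 2 * #|[set v | x \in Tv v]|].

Definition condorcet_super_domain n (D : {set {set trip n}}) : Prop :=
  forall (V : finType) (Tv : V -> {set trip n}),
    odd #|V| -> (forall v, Tv v \in D) -> tiling (sm Tv).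

Section Construction.
Variables (n : nat) (s : seq nat).
(* s is the enumeration j_1, ..., j_{n-2} of {2,...,n-1};
   index t : 'I_(n-2) (0-based) stands for the paper's t+1, so j_{t+1} = nth 0 s t *)

Definition jt (t : nat) : nat := nth 0 s t.

(* remaining set {2,...,n-1} \ {j_1,...,j_{t}} (paper: minus j_1..j_{t-1}) *)
Definition remaining (t : nat) (i : nat) : bool :=
  [&& 2 <= i, i <= n - 1 & i \notin take t s].

(* maximal set of consecutive integers in remaining t containing jt t:
   all integers between k and jt t (inclusive) are in remaining t *)
Definition Jt (t : nat) : {set 'I_n.+1} :=
  [set k : 'I_n.+1 |
     all (remaining t) (iota (minn k (jt t)) (maxn k (jt t) - minn k (jt t)).+1)].

Definition ext (J : {set 'I_n.+1}) : {set 'I_n.+1} :=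
  [set k : 'I_n.+1 | [exists a in J, exists b in J, (a - 1 <= k) && (k <= b + 1)]].

Definition Tt (t : nat) : {set trip n} :=
  [set x in Lambda n | [&& x.1.1 \in ext (Jt t), x.2 \in ext (Jt t),
                          x.1.1 < jt t & jt t < x.2]].

Definition TS (S : {set 'I_(n-2)}) : {set trip n} := \bigcup_(t in S) Tt t.

Definition Dom : {set {set trip n}} := [set TS S | S : {set 'I_(n-2)}].

End Construction.

(* Main.v *)
Require Import Defs.
From mathcomp Require Import all_boot zify.
Set Implicit Arguments. Unset Strict Implicit. Unset Printing Implicit Defensive.

Definition cls n (s : seq nat) (x : trip n) : nat :=
  find (fun m => (x.1.1 < m) && (m < x.2)) s.

Lemma sfacts n s : 3 <= n -> perm_eq s (iota 2 (n - 2)) ->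
  [/\ size s = n - 2, uniq s & forall m, (m \in s) = (2 <= m < n)].
Proof.
move=> n3 ps; split.
- by rewrite (perm_size ps) size_iota.
- by rewrite (perm_uniq ps) iota_uniq.
- by move=> m; rewrite (perm_mem ps) mem_iota; congr (_ && _); lia.
Qed.

Lemma take_find_noP (P : pred nat) (s : seq nat) m :
  m \in take (find P s) s -> ~~ P m.
Proof.
elim: s => [|x s IH] //=.
case Px: (P x) => //=.
rewrite inE => /orP[/eqP -> | /IH //]; by rewrite Px.
Qed.

Lemma find_or (P Q R : pred nat) (s : seq nat) :
  (forall m, R m = P m || Q m) -> find R s = minn (find P s) (find Q s).
Proof.
move=> hR; elim: s => [|x s IH] /=; first by rewrite minnn.
rewrite hR IH; case: (P x); case: (Q x) => //=; by rewrite ?minnSS ?minn0 ?min0n.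
Qed.

Lemma find_char (P : pred nat) (s : seq nat) t :
  t < size s -> P (nth 0 s t) -> (forall i, i < t -> ~~ P (nth 0 s i)) ->
  find P s = t.
Proof.
move=> ts Pt bef.
have hs : has P s by apply/(has_nthP 0); exists t.
case: (ltngtP (find P s) t) => // h.
- by move: (bef _ h); rewrite nth_find.
- by move: (before_find 0 h); rewrite Pt.
Qed.

Lemma memTt n s (t : 'I_(n-2)) (x : trip n) : 3 <= n -> perm_eq s (iota 2 (n - 2)) ->
  (x \in Tt n s t) = (x \in Lambda n) && (val t == cls s x).
Proof.
move=> n3 ps; have [sz us ms] := sfacts n3 ps.
rewrite /Tt inE; case xL: (x \in Lambda n) => //=.
move: xL; rewrite inE => /andP[/andP[a0 ab] bc].
have cn := ltn_ord x.2.
have tsz : t < size s by rewrite sz.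
have jts : jt s t \in s by apply: mem_nth.
move: jts; rewrite ms => /andP[jt2 jtn].
apply/idP/idP.
- case/and4P => aE cE ajt jtc.
  move: aE; rewrite inE => /existsP[a' /andP[a'J /existsP[b' /andP[b'J /andP[h1 h2]]]]].
  move: cE; rewrite inE => /existsP[c' /andP[c'J /existsP[d' /andP[d'J /andP[h3 h4]]]]].
  apply/eqP; symmetry; apply: find_char => //; first by rewrite /= ajt jtc.
  move=> i it; apply/negP => /andP[am mc].
  have mtake : nth 0 s i \in take t s.
    by rewrite -(nth_take 0 it); apply: mem_nth; rewrite size_take tsz.
  have: remaining n s t (nth 0 s i).
    case: (leqP (nth 0 s i) (jt s t)) => hm.
    + move: a'J; rewrite inE => /allP; apply; rewrite mem_iota; lia.
    + move: d'J; rewrite inE => /allP; apply; rewrite mem_iota; lia.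
  by rewrite /remaining mtake !andbF.
- move/eqP => e.
  have hs : has (fun m => (x.1.1 < m) && (m < x.2)) s by rewrite has_find; move: tsz; rewrite e.
  have Pj : (x.1.1 < jt s t) && (jt s t < x.2).
    rewrite /jt e /cls; exact: (nth_find 0 hs).
  case/andP: Pj => ajt jtc.
  have Jk : forall k : 'I_n.+1, x.1.1 < k < x.2 -> k \in Jt n s t.
    move=> k /andP[ak kc]; rewrite inE; apply/allP => m; rewrite mem_iota => hm.
    rewrite /remaining; apply/and3P; split; try lia.
    apply/negP; rewrite e => /take_find_noP /negP; apply; apply/andP; split; lia.
  rewrite ajt jtc !andbT; apply/andP; split; rewrite inE.
  + apply/existsP; exists (inord x.1.1.+1); rewrite Jk ?inordK /=; try lia.
    apply/existsP; exists (inord x.1.1.+1); rewrite Jk ?inordK /=; lia.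
  + apply/existsP; exists (inord x.2.-1); rewrite Jk ?inordK /=; try lia.
    apply/existsP; exists (inord x.2.-1); rewrite Jk ?inordK /=; lia.
Qed.

Lemma mem_TS n s (S : {set 'I_(n-2)}) (x : trip n) : 3 <= n -> perm_eq s (iota 2 (n - 2)) ->
  (x \in TS s S) = (x \in Lambda n) && [exists t in S, val t == cls s x].
Proof.
move=> n3 ps; rewrite /TS; apply/bigcupP/andP.
- by case=> t tS; rewrite memTt // => /andP[xL e]; split => //; apply/existsP; exists t; rewrite tS.
- by case=> xL /existsP[t /andP[tS e]]; exists t => //; rewrite memTt // xL.
Qed.

Lemma cls_lt n s (x : trip n) : 3 <= n -> perm_eq s (iota 2 (n - 2)) ->
  x \in Lambda n -> cls s x < n - 2.
Proof.
move=> n3 ps; have [sz us ms] := sfacts n3 ps.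
rewrite inE => /andP[/andP[a0 ab] bc].
have cn := ltn_ord x.2.
rewrite -sz /cls -has_find; apply/hasP; exists (nat_of_ord x.1.2); last by rewrite ab bc.
rewrite ms; lia.
Qed.

Lemma exS n s (S : {set 'I_(n-2)}) (x : trip n) (t0 : 'I_(n-2)) :
  val t0 = cls s x -> [exists t in S, val t == cls s x] = (t0 \in S).
Proof.
move=> e; apply/existsP/idP.
- by case=> t /andP[tS /eqP e']; have -> : t0 = t by apply: val_inj; rewrite /= e e'.
- by move=> h; exists t0; rewrite h e eqxx.
Qed.

Lemma Lam3 n (i j k : 'I_n.+1) : 0 < i -> i < j -> j < k -> mk3 i j k \in Lambda n.
Proof. by move=> *; rewrite inE /=; apply/andP; split => //; apply/andP. Qed.

Lemma seg_key (g : nat -> bool) p q :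
  init_seg [:: g p; g (minn p q); g (minn p q); g q] \/
  final_seg [:: g p; g (minn p q); g (minn p q); g q].
Proof.
have [->|->] : minn p q = p \/ minn p q = q by case: (leqP p q) => h; [left|right]; lia.
all: case: (g p); case: (g q);
first [ left; exists 0; split; [done|reflexivity]
      | left; exists 1; split; [done|reflexivity]
      | left; exists 3; split; [done|reflexivity]
      | left; exists 4; split; [done|reflexivity]
      | right; exists 1; split; [done|reflexivity]
      | right; exists 3; split; [done|reflexivity] ].
Qed.

Lemma tiling_TS n s (S : {set 'I_(n-2)}) : 3 <= n -> perm_eq s (iota 2 (n - 2)) -> tiling (TS s S).
Proof.
move=> n3 ps; split.
  by apply/subsetP => x; rewrite mem_TS // => /andP[].
move=> i j k l i0 ij jk kl; cbv zeta.
rewrite /stick /= !mem_TS // !Lam3 //; try lia.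
rewrite /cls /=.
have -> : find (fun m => (i < m) && (m < l)) s =
          minn (find (fun m => (i < m) && (m < k)) s) (find (fun m => (j < m) && (m < l)) s).
  apply: find_or => m.
  case: (ltnP i m) => h1; case: (ltnP m l) => h2; case: (ltnP m k) => h3;
    case: (ltnP j m) => h4 //=; lia.
move: (find (fun m => (i < m) && (m < k)) s) (find (fun m => (j < m) && (m < l)) s) => p q.
exact: (seg_key (fun c => [exists t in S, val t == c]) p q).
Qed.

Definition xt n (s : seq nat) (t : nat) : trip n :=
  mk3 (inord (jt s t).-1 : 'I_n.+1) (inord (jt s t)) (inord (jt s t).+1).

Lemma xt_prop n s (t : 'I_(n-2)) : 3 <= n -> perm_eq s (iota 2 (n - 2)) ->
  xt n s t \in Lambda n /\ cls s (xt n s t) = t.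
Proof.
move=> n3 ps; have [sz us ms] := sfacts n3 ps.
have tsz : t < size s by rewrite sz.
have jts : jt s t \in s by apply: mem_nth.
move: jts; rewrite ms => /andP[jt2 jtn].
split.
  by rewrite inE /xt /= !inordK; try lia; apply/andP; split; try apply/andP; try split; lia.
rewrite /cls /xt /= !inordK; try lia.
have -> : find (fun m => ((jt s t).-1 < m) && (m < (jt s t).+1)) s = index (jt s t) s.
  by apply: eq_find => m /=; apply/andP/eqP => [[h1 h2]|->]; lia.
by rewrite /jt index_uniq.
Qed.

Lemma memTS_xt n s (S : {set 'I_(n-2)}) (t : 'I_(n-2)) : 3 <= n -> perm_eq s (iota 2 (n - 2)) ->
  (xt n s t \in TS s S) = (t \in S).
Proof.
move=> n3 ps; have [xL e] := xt_prop t n3 ps.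
by rewrite mem_TS // xL (exS _ (t0 := t)).
Qed.

Theorem theorem3 (n : nat) (s : seq nat) :
  3 <= n -> perm_eq s (iota 2 (n - 2)) ->
  (forall T, T \in Dom n s -> tiling T) /\
  #|Dom n s| = 2 ^ (n - 2) /\
  (forall T, T \in Dom n s -> Lambda n :\: T \in Dom n s) /\
  condorcet_super_domain (Dom n s).
Proof.
move=> n3 ps; split; [|split; [|split]].
- by move=> T /imsetP[S _ ->]; apply: tiling_TS.
- rewrite /Dom card_imset.
    by rewrite -cardsT -powersetT card_powerset cardsT card_ord.
  move=> S1 S2 e; apply/setP => t.
  by rewrite -(memTS_xt S1 t n3 ps) -(memTS_xt S2 t n3 ps) e.
- move=> T /imsetP[S _ ->]; apply/imsetP; exists (~: S) => //.
  apply/setP => x; rewrite inE !mem_TS //.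
  case xL: (x \in Lambda n) => //=.
  have h := cls_lt n3 ps xL.
  by rewrite !(exS _ (t0 := Ordinal h)) // inE andbT.
- move=> V Tv _ hT.
  pose Ss := [set t : 'I_(n-2) | #|V| < 2 * #|[set v | xt n s t \in Tv v]|].
  suff -> : sm Tv = TS s Ss by apply: tiling_TS.
  apply/setP => x; rewrite mem_TS // /sm inE.
  case xL: (x \in Lambda n) => /=.
  + have h := cls_lt n3 ps xL.
    rewrite (exS _ (t0 := Ordinal h)) // inE.
    have [xtL xte] := xt_prop (Ordinal h) n3 ps.
    rewrite (_ : [set v | x \in Tv v] = [set v | xt n s (Ordinal h) \in Tv v]) //.
    apply/setP => v; rewrite !inE.
    case/imsetP: (hT v) => S _ ->; rewrite !mem_TS // xL xtL /=.
    rewrite (exS _ (t0 := Ordinal h)) // (exS _ (t0 := Ordinal h)) //.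
  + rewrite (_ : [set v | x \in Tv v] = set0) ?cards0 ?muln0 ?ltn0 //.
    apply/setP => v; rewrite !inE; case/imsetP: (hT v) => S _ ->.
    by rewrite mem_TS // xL.
Qed.
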